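(* Under the setting of the context, if (TS1) holds then the solution $u$ of problem (P) satisfies $u(x,t)\ge0$ for all $(x,t)\in\Omega$.
   Context: A time scale $\mathbb{T}$ is a nonempty closed subset of $\mathbb{R}$; here $\min\mathbb{T}=0$ and $\sup\mathbb{T}=+\infty$. $\sigma(t)=\inf\{s\in\mathbb{T}:s>t\}$ is the forward jump and $\mu_t(t)=\sigma(t)-t$ the graininess; $u^{\Delta_t}$ denotes the (Hilger) delta derivative in $t$. Fix $A>0$, $k>0$, $\mu_x>0$, $\Omega=\mu_x\mathbb{Z}\times\mathbb{T}$. Problem (P): $u^{\Delta_t}(x,t)+k\frac{u(x,t)-u(x-\mu_x,t)}{\mu_x}=0$ for $(x,t)\in\Omega$, $u(0,0)=A$, $u(x,0)=0$ for $x\ne0$. A solution is $u:\Omega\to\mathbb{R}$ with each $u(x,\cdot)$ delta differentiable on $\mathbb{T}$, satisfying (P), and bounded on $\mu_x\mathbb{Z}\times(\mathbb{T}\cap[0,T_0])$ for every $T_0>0$. Condition (TS1): $1-\frac{k\mu_t(t)}{\mu_x}>0$ for all $t\in\mathbb{T}$. *)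

(* Defs.v *)
From Stdlib Require Import Reals ZArith.
Open Scope R_scope.

Definition closed_set (T : R -> Prop) : Prop :=
  forall x, (forall eps, 0 < eps -> exists y, T y /\ Rabs (x - y) < eps) -> T x.

Definition time_scale_0_inf (T : R -> Prop) : Prop :=
  closed_set T /\ T 0 /\ (forall t, T t -> 0 <= t) /\
  (forall M, exists t, T t /\ M < t).

Definition is_glb_R (E : R -> Prop) (m : R) : Prop :=
  (forall x, E x -> m <= x) /\ (forall b, (forall x, E x -> b <= x) -> b <= m).

Definition is_sigma (T : R -> Prop) (t s : R) : Prop :=
  is_glb_R (fun r => T r /\ t < r) s.

Definition graininess (T : R -> Prop) (t m : R) : Prop :=
  exists s, is_sigma T t s /\ m = s - t.

Definition delta_deriv (T : R -> Prop) (f : R -> R) (t a : R) : Prop :=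
  exists sg, is_sigma T t sg /\
  forall eps, 0 < eps -> exists delta, 0 < delta /\
    forall s, T s -> Rabs (t - s) < delta ->
      Rabs (f sg - f s - a * (sg - s)) <= eps * Rabs (sg - s).

(* Solution of (P) on Omega = mux Z x T; u n t stands for u(n*mux, t). *)
Definition is_solution_P (T : R -> Prop) (A k mux : R) (u : Z -> R -> R) : Prop :=
  (exists ud : Z -> R -> R,
     forall (n : Z) (t : R), T t ->
       delta_deriv T (u n) t (ud n t) /\
       ud n t + k * (u n t - u (n - 1)%Z t) / mux = 0) /\
  u 0%Z 0 = A /\
  (forall n : Z, n <> 0%Z -> u n 0 = 0) /\
  (forall T0, 0 < T0 -> exists M, forall (n : Z) (t : R),
      T t -> t <= T0 -> Rabs (u n t) <= M).

Definition TS1 (T : R -> Prop) (k mux : R) : Prop :=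
  forall t m, T t -> graininess T t m -> 1 - k * m / mux > 0.

(* Main.v *)
Require Import Defs.
From Stdlib Require Import Reals ZArith Lra Lia Psatz Classical.
Open Scope R_scope.

Lemma neg_abs_le (x : R) : - Rabs x <= x.
Proof. pose proof (Rle_abs (-x)). rewrite Rabs_Ropp in H. lra. Qed.

Lemma glb_exists (E : R -> Prop) (b : R) :
  (forall x, E x -> b <= x) -> (exists x, E x) -> exists m, is_glb_R E m.
Proof.
  intros Hb [x Hx].
  destruct (completeness (fun y => E (- y))) as [m [Hm1 Hm2]].
  - exists (- b). intros y Hy. apply Hb in Hy. lra.
  - exists (- x). rewrite Ropp_involutive. exact Hx.
  - exists (- m). split.
    + intros z Hz. assert (- z <= m). { apply Hm1. rewrite Ropp_involutive. exact Hz. } lra.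
    + intros b' Hb'. assert (m <= - b'). { apply Hm2. intros y Hy. apply Hb' in Hy. lra. } lra.
Qed.

Lemma glb_unique E m1 m2 : is_glb_R E m1 -> is_glb_R E m2 -> m1 = m2.
Proof.
  intros [A1 B1] [A2 B2]. apply Rle_antisym; [apply B2 | apply B1]; assumption.
Qed.

Lemma glb_approx E m : is_glb_R E m -> forall eps, 0 < eps -> exists x, E x /\ x < m + eps.
Proof.
  intros [A B] eps He. apply NNPP. intro N.
  assert (m + eps <= m). { apply B. intros x Hx. apply Rnot_lt_le. intro. apply N. exists x; auto. }
  lra.
Qed.

Lemma glb_closed T E m : Defs.closed_set T -> (forall x, E x -> T x) -> is_glb_R E m -> T m.
Proof.
  intros HC HE Hm. unfold Defs.closed_set in HC. apply HC. intros eps He.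
  destruct (glb_approx E m Hm eps He) as [x [Hx Hlt]].
  exists x. split; [auto|]. destruct Hm as [A _]. specialize (A x Hx).
  rewrite Rabs_left1; lra.
Qed.

Lemma lub_approx E m : is_lub E m -> forall eps, 0 < eps -> exists x, E x /\ m - eps < x.
Proof.
  intros [A B] eps He. apply NNPP. intro N.
  assert (m <= m - eps). { apply B. intros x Hx. apply Rnot_lt_le. intro. apply N. exists x; auto. }
  lra.
Qed.

Lemma lub_closed T E m : Defs.closed_set T -> (forall x, E x -> T x) -> is_lub E m -> T m.
Proof.
  intros HC HE Hm. unfold Defs.closed_set in HC. apply HC. intros eps He.
  destruct (lub_approx E m Hm eps He) as [x [Hx Hlt]].
  exists x. split; [auto|]. destruct Hm as [A _]. specialize (A x Hx).
  rewrite Rabs_right; lra.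
Qed.

Lemma sigma_ge T t s : is_sigma T t s -> t <= s.
Proof. intros [_ B]. apply B. intros x [_ Hx]. lra. Qed.

Lemma sigma_in T t s : Defs.closed_set T -> is_sigma T t s -> T s.
Proof. intros HC Hs. eapply glb_closed; [exact HC| |exact Hs]. intros x [Hx _]; exact Hx. Qed.

Lemma sigma_gap T t s r : is_sigma T t s -> T r -> t < r -> s <= r.
Proof. intros [A _] Hr Htr. apply A. auto. Qed.

Lemma sigma_exists T t : time_scale_0_inf T -> exists s, is_sigma T t s.
Proof.
  intros [_ [_ [_ HU]]]. destruct (HU t) as [r [Hr Htr]].
  apply (glb_exists _ t).
  - intros x [_ Hx]; lra.
  - exists r; auto.
Qed.

Lemma small_zero X D : (forall eps, 0 < eps -> Rabs X <= eps * D) -> 0 <= D -> X = 0.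
Proof.
  intros H HD. destruct (Req_dec X 0) as [|Hn]; [auto|].
  pose proof (Rabs_pos_lt X Hn) as Hp.
  set (e := Rabs X / (2 * (D + 1))).
  assert (He : e * (2 * (D+1)) = Rabs X) by (unfold e; field; lra).
  assert (0 < e) by (unfold e; apply Rdiv_lt_0_compat; lra).
  specialize (H e H0). nra.
Qed.

Lemma deriv_scattered T f t a s : T t -> delta_deriv T f t a -> is_sigma T t s -> t < s ->
  f s = f t + (s - t) * a.
Proof.
  intros Ht [sg [Hsg H]] Hs Hts.
  rewrite (glb_unique _ _ _ Hs Hsg) in *.
  assert (f sg - f t - a * (sg - t) = 0).
  { apply (small_zero _ (Rabs (sg - t))); [|apply Rabs_pos].
    intros eps He. destruct (H eps He) as [d [Hd Hd2]]. apply Hd2; auto.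
    unfold Rminus. rewrite Rplus_opp_r, Rabs_R0. exact Hd. }
  lra.
Qed.

Lemma deriv_dense T f t a : delta_deriv T f t a -> is_sigma T t t ->
  forall eta, 0 < eta -> exists d, 0 < d /\ forall s, T s -> Rabs (t - s) < d ->
    Rabs (f t - f s - a * (t - s)) <= eta * Rabs (t - s).
Proof.
  intros [sg [Hsg H]] Ht. rewrite (glb_unique _ _ _ Hsg Ht) in H. exact H.
Qed.

Lemma deriv_left_cont T f t a : T t -> delta_deriv T f t a ->
  forall g, 0 < g -> exists d, 0 < d /\ forall s, T s -> t - d < s -> s < t -> f s - g < f t.
Proof.
  intros Ht [sg [Hsg H]] g Hg.
  pose proof (sigma_ge _ _ _ Hsg) as Hge.
  set (eta := g / (2 * (2 * (sg - t) + 1))).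
  assert (Heta : eta * (2 * (2 * (sg - t) + 1)) = g) by (unfold eta; field; lra).
  assert (0 < eta) by (unfold eta; apply Rdiv_lt_0_compat; lra).
  destruct (H eta H0) as [d [Hd Hd2]].
  set (d2 := Rmin d (Rmin 1 (g / (2 * (Rabs a + 1))))).
  assert (Hd2a : d2 <= d) by apply Rmin_l.
  assert (Hd2b : d2 <= 1) by (eapply Rle_trans; [apply Rmin_r| apply Rmin_l]).
  assert (Hd2c : d2 <= g / (2 * (Rabs a + 1))) by (eapply Rle_trans; [apply Rmin_r| apply Rmin_r]).
  assert (Hpa := Rabs_pos a).
  assert (Hq : g / (2 * (Rabs a + 1)) * (2 * (Rabs a + 1)) = g) by (field; lra).
  exists d2. split.
  { unfold d2. apply Rmin_pos; [lra|]. apply Rmin_pos; [lra|]. apply Rdiv_lt_0_compat; lra. }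
  intros s Hs H1 H2.
  assert (E1 := Hd2 s Hs ltac:(rewrite Rabs_right; lra)).
  assert (E2 := Hd2 t Ht ltac:(unfold Rminus; rewrite Rplus_opp_r, Rabs_R0; lra)).
  rewrite (Rabs_right (sg - s)) in E1 by lra.
  rewrite (Rabs_right (sg - t)) in E2 by lra.
  pose proof (neg_abs_le (f sg - f s - a * (sg - s))).
  pose proof (Rle_abs (f sg - f t - a * (sg - t))).
  pose proof (neg_abs_le a). pose proof (Rle_abs a).
  assert (a * (t - s) >= - Rabs a * (t - s)) by nra.
  assert (Rabs a * (t - s) < g / 2).
  { assert ((Rabs a + 1) * (t - s) <= g / 2) by nra. nra. }
  nra.
Qed.
Lemma ts_induction T (P : R -> Prop) t0 :
  time_scale_0_inf T -> T t0 -> P t0 ->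
  (forall t s, T t -> t0 <= t -> is_sigma T t s -> t < s -> P t -> P s) ->
  (forall t, T t -> t0 <= t -> is_sigma T t t -> P t ->
     exists d, 0 < d /\ forall s, T s -> t < s -> s < t + d -> P s) ->
  (forall t, T t -> t0 < t -> (forall d, 0 < d -> exists s, T s /\ t - d < s /\ s < t) ->
     (forall s, T s -> t0 <= s -> s < t -> P s) -> P t) ->
  forall t, T t -> t0 <= t -> P t.
Proof.
  intros HT Ht0 H0 Hrs Hrd Hld.
  assert (HC : Defs.closed_set T) by apply HT.
  apply NNPP. intro Nall.
  assert (Hex : exists x, T x /\ t0 <= x /\ ~ P x).
  { apply NNPP. intro N. apply Nall. intros t Ht Hle. apply NNPP. intro Np. apply N. eauto. }
  destruct (glb_exists (fun x => T x /\ t0 <= x /\ ~ P x) t0) as [m Hm].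
  { intros x [_ [Hx _]]. exact Hx. }
  { exact Hex. }
  assert (Tm : T m) by (eapply glb_closed; [exact HC| |exact Hm]; intros x [Hx _]; exact Hx).
  assert (Hm0 : t0 <= m) by (destruct Hm as [_ B]; apply B; intros x [_ [Hx _]]; exact Hx).
  assert (Good : forall s, T s -> t0 <= s -> s < m -> P s).
  { intros s Ts Hs Hsm. apply NNPP. intro Np. destruct Hm as [A _].
    assert (m <= s) by (apply A; auto). lra. }
  assert (Pm : P m).
  { destruct (Req_dec m t0) as [E|Hne]; [rewrite E; exact H0|].
    destruct (classic (forall d, 0 < d -> exists s, T s /\ m - d < s /\ s < m)) as [LD|NLD].
    - apply Hld; auto. lra.
    - assert (Hd : exists d, 0 < d /\ forall s, T s -> ~ (m - d < s /\ s < m)).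
      { apply NNPP. intro N. apply NLD. intros d Hd. apply NNPP. intro N2. apply N.
        exists d. split; auto. intros s Ts [H1 H2]. apply N2. exists s. auto. }
      destruct Hd as [d [Hd Hgap]].
      destruct (completeness (fun x => T x /\ t0 <= x /\ x < m)) as [r Hr].
      { exists m. intros x [_ [_ Hx]]. lra. }
      { exists t0. split; [auto|split; lra]. }
      assert (Tr : T r) by (eapply lub_closed; [exact HC| |exact Hr]; intros x [Hx _]; exact Hx).
      assert (Hr0 : t0 <= r) by (destruct Hr as [A _]; apply A; repeat split; auto; lra).
      assert (Hrm : r <= m - d).
      { destruct Hr as [_ B]. apply B. intros x [Tx [Hx1 Hx2]].
        apply Rnot_lt_le. intro. apply (Hgap x Tx). lra. }
      apply (Hrs r m); auto.
      + split.
        * intros x [Tx Hx]. apply Rnot_lt_le. intro. destruct Hr as [A _].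
          assert (x <= r) by (apply A; repeat split; auto; lra). lra.
        * intros b Hb. apply Hb. split; auto. lra.
      + lra.
      + apply Good; auto. lra. }
  destruct Hm as [HmA HmB].
  destruct (sigma_exists T m HT) as [s Hs].
  pose proof (sigma_ge _ _ _ Hs) as Hms.
  destruct (Rle_lt_or_eq_dec _ _ Hms) as [Hlt|Heq].
  - assert (Ps : P s) by (apply (Hrs m s); auto).
    assert (s <= m).
    { apply HmB. intros x [Tx [Hx Np]].
      assert (m <= x) by (apply HmA; auto).
      destruct (Req_dec x m) as [E|Ne]; [subst; contradiction|].
      assert (s <= x) by (apply (sigma_gap T m s x); auto; lra).
      destruct (Req_dec x s) as [E|Ne2]; [subst; contradiction|]. lra. }
    lra.
  - subst s. destruct (Hrd m Tm Hm0 Hs Pm) as [d [Hd Hdd]].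
    assert (m + d <= m).
    { apply HmB. intros x [Tx [Hx Np]].
      assert (m <= x) by (apply HmA; auto).
      destruct (Req_dec x m) as [E|Ne]; [subst; contradiction|].
      apply Rnot_lt_le. intro. apply Np. apply Hdd; auto. lra. }
    lra.
Qed.
Lemma barrier T (c a tau t2 eps : R) (f g D : R -> R) :
  time_scale_0_inf T -> 0 < c -> 0 <= a -> 0 < eps -> 0 <= tau ->
  (forall t m, T t -> graininess T t m -> 1 - c * m > 0) ->
  (forall t, T t -> delta_deriv T f t (D t) /\ D t = - c * f t + c * g t) ->
  (forall s, T s -> s <= tau -> 0 <= f s) ->
  (forall s, T s -> s <= tau -> 0 <= g s) ->
  (forall s, T s -> s <= t2 -> - a <= g s) ->
  forall t, T t -> tau <= t -> t <= t2 -> 0 <= f t + (a * c + eps) * (t - tau).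
Proof.
  intros HT Hc Ha He Htau HTS HD Hf0 Hg0 Hga.
  set (e := a * c + eps).
  assert (Hpos : forall t, T t -> 0 <= t) by apply HT.
  assert (T0 : T 0) by apply HT.
  enough (Hall : forall t, T t -> 0 <= t -> (t <= t2 -> tau <= t -> 0 <= f t + e * (t - tau))).
  { intros t Tt H1 H2. apply Hall; auto. }
  apply (ts_induction T (fun t => t <= t2 -> tau <= t -> 0 <= f t + e * (t - tau)) 0); auto.
  - intros H1 H2. assert (tau = 0) by lra. subst tau.
    specialize (Hf0 0 T0 (Rle_refl 0)). lra.
  - intros t s Tt Ht0 Hs Hts Pt Hst2 Htaus.
    destruct (HD t Tt) as [Hdt HDt].
    pose proof (deriv_scattered T f t (D t) s Tt Hdt Hs Hts) as Efs.
    assert (Hg : 1 - c * (s - t) > 0) by (apply (HTS t); auto; exists s; split; auto).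
    set (mu := s - t) in *.
    assert (Hmu : 0 < mu) by (unfold mu; lra).
    assert (Hcm : 0 < c * mu) by nra.
    destruct (Rlt_le_dec t tau) as [Hlt|Hle].
    + assert (F := Hf0 t Tt ltac:(lra)). assert (G := Hg0 t Tt ltac:(lra)).
      assert (0 <= f s) by (rewrite Efs, HDt; nra).
      assert (0 <= e * (s - tau)) by (unfold e; apply Rmult_le_pos; nra).
      lra.
    + assert (Ht := Pt ltac:(lra) Hle). assert (G := Hga t Tt ltac:(lra)).
      rewrite Efs, HDt. fold mu.
      assert (0 <= e * (t - tau)) by (unfold e; apply Rmult_le_pos; nra).
      replace (s - tau) with ((t - tau) + mu) by (unfold mu; ring).
      unfold e in *.
      destruct (Rle_lt_dec (f t) 0).
      * assert (c * mu * f t <= 0) by nra.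
        assert (c * mu * g t >= - (c * mu * a)) by nra.
        nra.
      * assert (0 <= (1 - c * mu) * f t) by nra.
        assert (c * mu * g t >= - (c * mu * a)) by nra.
        nra.
  - intros t Tt Ht0 Hs Pt.
    destruct (Rle_lt_dec t2 t) as [Ht2|Ht2].
    { exists 1. split; [lra|]. intros s _ H1 _ H3. lra. }
    destruct (Rlt_le_dec t tau) as [Hlt|Hle].
    { exists (tau - t). split; [lra|]. intros s _ H1 H2 _ H3. lra. }
    assert (Ht := Pt ltac:(lra) Hle). assert (G := Hga t Tt ltac:(lra)).
    destruct (HD t Tt) as [Hdt HDt].
    destruct (deriv_dense T f t (D t) Hdt Hs (eps / 2) ltac:(lra)) as [d [Hd Hdd]].
    exists (Rmin d (/ c)). split; [apply Rmin_pos; [lra| apply Rinv_0_lt_compat; lra]|].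
    intros s Ts H1 H2 H3 H4.
    assert (s - t < d) by (pose proof (Rmin_l d (/c)); lra).
    assert (Hsc : c * (s - t) < 1).
    { assert (s - t < / c) by (pose proof (Rmin_r d (/c)); lra).
      apply (Rmult_lt_compat_l c) in H0; [|lra]. rewrite Rinv_r in H0; lra. }
    assert (E := Hdd s Ts ltac:(rewrite Rabs_left; lra)).
    rewrite (Rabs_left (t - s)) in E by lra.
    pose proof (Rle_abs (f t - f s - D t * (t - s))) as HA.
    rewrite HDt in HA, E.
    unfold e in *.
    assert (Hcs : 0 < c * (s - t)) by nra.
    assert (Hga2 : 0 <= (g t + a) * (c * (s - t))) by (apply Rmult_le_pos; lra).
    assert (Hl : (a * c + eps) * (s - tau) = (a * c + eps) * (t - tau) + a * (c * (s - t)) + eps * (s - t)) by ring.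
    assert (HD2 : (- c * f t + c * g t) * (t - s) = f t * (c * (s - t)) - (g t + a) * (c * (s - t)) + a * (c * (s - t))) by ring.
    destruct (Rle_lt_dec (f t) 0).
    + assert (f t * (c * (s - t)) <= 0) by nra.
      nra.
    + assert (f t * (1 - c * (s - t)) >= 0) by nra.
      assert (0 <= (a * c + eps) * (t - tau)) by (apply Rmult_le_pos; nra).
      nra.
  - intros t Tt Ht0 LD Hprev Ht2 Htt.
    destruct (Req_dec t tau) as [E|Ne].
    { subst. specialize (Hf0 tau Tt (Rle_refl _)). lra. }
    apply Rnot_lt_le. intro Hneg.
    set (gam := - (f t + e * (t - tau))) in *.
    destruct (HD t Tt) as [Hdt _].
    destruct (deriv_left_cont T f t (D t) Tt Hdt (gam / 2) ltac:(unfold gam; lra)) as [d [Hd Hdd]].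
    destruct (LD (Rmin d (t - tau)) ltac:(apply Rmin_pos; lra)) as [s [Ts [Hs1 Hs2]]].
    pose proof (Rmin_l d (t - tau)). pose proof (Rmin_r d (t - tau)).
    assert (Ps := Hprev s Ts ltac:(apply Hpos; auto) Hs2 ltac:(lra) ltac:(lra)).
    assert (Hc2 := Hdd s Ts ltac:(lra) Hs2).
    assert (e * (s - tau) <= e * (t - tau)) by (unfold e; apply Rmult_le_compat_l; nra).
    unfold gam in *. lra.
Qed.
Lemma lim_eps x b d : (forall eps, 0 < eps -> 0 <= x + (b + eps) * d) -> 0 <= d -> 0 <= x + b * d.
Proof.
  intros H Hd. apply Rnot_lt_le. intro Hn.
  destruct (Req_dec d 0) as [E|Ne].
  - subst. specialize (H 1 Rlt_0_1). lra.
  - assert (0 < d) by lra.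
    set (e := - (x + b * d) / (2 * d)).
    assert (He : e * (2 * d) = - (x + b * d)) by (unfold e; field; lra).
    assert (0 < e) by (unfold e; apply Rdiv_lt_0_compat; lra).
    specialize (H e H1). nra.
Qed.

Lemma halving_zero M x : 0 <= M -> (forall j, - (M * (/ 2) ^ j) <= x) -> 0 <= x.
Proof.
  intros HM H. apply Rnot_lt_le. intro Hn.
  assert (Hy : 0 < - x / (M + 1)) by (apply Rdiv_lt_0_compat; lra).
  destruct (pow_lt_1_zero (/ 2) ltac:(rewrite Rabs_right; lra) _ Hy) as [N HN].
  specialize (HN N (Nat.le_refl N)). specialize (H N).
  assert (Hp : 0 < (/ 2) ^ N) by (apply pow_lt; lra).
  rewrite Rabs_right in HN by lra.
  assert (Hq : - x / (M + 1) * (M + 1) = - x) by (field; lra).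
  assert (M * (/2)^N <= (M + 1) * (/2)^N) by nra.
  assert ((M + 1) * (/2)^N < (M+1) * (- x / (M + 1))) by (apply Rmult_lt_compat_l; lra).
  nra.
Qed.

Lemma nat_unbounded r h : 0 < h -> exists N : nat, r <= INR N * h.
Proof.
  intros Hh.
  destruct (Rle_lt_dec r 0) as [Hr|Hr].
  { exists 0%nat. simpl. lra. }
  destruct (archimed_cor1 (h / r) ltac:(apply Rdiv_lt_0_compat; lra)) as [N [HN HN0]].
  exists N. assert (HI : 0 < INR N) by (apply lt_0_INR; lia).
  assert (Hm : / INR N * (INR N * r) < h / r * (INR N * r)).
  { apply Rmult_lt_compat_r; [nra| exact HN]. }
  replace (/ INR N * (INR N * r)) with r in Hm by (field; lra).
  replace (h / r * (INR N * r)) with (INR N * h) in Hm by (field; lra).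
  lra.
Qed.

Theorem mainTheorem9 (T : R -> Prop) (A k mux : R) (u : Z -> R -> R) :
  time_scale_0_inf T -> 0 < A -> 0 < k -> 0 < mux ->
  TS1 T k mux ->
  is_solution_P T A k mux u ->
  forall (n : Z) (t : R), T t -> 0 <= u n t.
Proof.
  intros HT HA Hk Hmux HTS [[ud Hud] [Hu0 [Hun Hbd]]].
  set (c := k / mux).
  assert (Hc : 0 < c) by (unfold c; apply Rdiv_lt_0_compat; lra).
  assert (HTS' : forall t m, T t -> graininess T t m -> 1 - c * m > 0).
  { intros t m Tt Hg. specialize (HTS t m Tt Hg). unfold c.
    replace (k / mux * m) with (k * m / mux) by (field; lra). exact HTS. }
  assert (HD : forall n t, T t -> delta_deriv T (u n) t (ud n t) /\
             ud n t = - c * u n t + c * u (n - 1)%Z t).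
  { intros n t Tt. destruct (Hud n t Tt) as [H1 H2]. split; auto.
    unfold c. apply (Rmult_eq_reg_r mux); [|lra].
    assert (k * (u n t - u (n - 1)%Z t) / mux * mux = k * (u n t - u (n - 1)%Z t)) by (field; lra).
    assert ((- (k / mux) * u n t + k / mux * u (n - 1)%Z t) * mux = - (k * (u n t - u (n - 1)%Z t))) by (field; lra).
    nra. }
  assert (Hpos : forall t, T t -> 0 <= t) by apply HT.
  set (h := / (2 * c)).
  assert (Hh : 0 < h) by (unfold h; apply Rinv_0_lt_compat; lra).
  assert (Hch : c * h = / 2) by (unfold h; field; lra).
  assert (Step : forall tau, 0 <= tau -> (forall n s, T s -> s <= tau -> 0 <= u n s) ->
                 forall n s, T s -> s <= tau + h -> 0 <= u n s).
  { intros tau Htau IH.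
    destruct (Hbd (tau + h) ltac:(lra)) as [M HM].
    assert (HM0 : 0 <= M).
    { assert (T 0) by apply HT. specialize (HM 0%Z 0 H ltac:(lra)).
      pose proof (Rabs_pos (u 0%Z 0)). lra. }
    assert (Hj : forall j, forall n s, T s -> s <= tau + h -> - (M * (/2)^j) <= u n s).
    { induction j as [|j IHj]; intros n s Ts Hs.
      - simpl. specialize (HM n s Ts Hs). pose proof (neg_abs_le (u n s)). lra.
      - set (a := M * (/2)^j).
        assert (Ha : 0 <= a) by (unfold a; apply Rmult_le_pos; [lra| apply pow_le; lra]).
        assert (Ea : M * (/2)^(S j) = a / 2) by (unfold a; simpl; field).
        rewrite Ea.
        destruct (Rle_lt_dec s tau) as [Hst|Hst].
        { specialize (IH n s Ts Hst). lra. }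
        assert (B : 0 <= u n s + a * c * (s - tau)).
        { apply lim_eps; [|lra]. intros eps Heps.
          apply (barrier T c a tau (tau + h) eps (u n) (u (n - 1)%Z) (ud n)); auto; try lra.
          all: try (intros t Tt; apply HD; assumption).
          all: try (intros t Tt Ht; apply IH; assumption).
          all: try (intros t Tt Ht; apply IHj; auto; lra). }
        assert (a * c * (s - tau) <= a * c * h).
        { apply Rmult_le_compat_l; [apply Rmult_le_pos; lra| lra]. }
        assert (a * c * h = a / 2) by (rewrite Rmult_assoc, Hch; try field).
        lra. }
    intros n s Ts Hs. apply (halving_zero M); [exact HM0| intro j; apply Hj; auto]. }
  assert (Hall : forall N : nat, forall n s, T s -> s <= INR N * h -> 0 <= u n s).
  { induction N as [|N IHN]; intros n s Ts Hs.
    - simpl in Hs. assert (s = 0) by (specialize (Hpos s Ts); lra). subst s.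
      destruct (Z.eq_dec n 0) as [E|Ne]; [subst; lra|]. rewrite (Hun n Ne). lra.
    - rewrite S_INR in Hs. apply (Step (INR N * h)).
      + apply Rmult_le_pos; [apply pos_INR| lra].
      + exact IHN.
      + exact Ts.
      + lra. }
  intros n t Tt. destruct (nat_unbounded t h Hh) as [N HN]. eapply Hall; eauto.
Qed.
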